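(* Let $S$ be a semiring and $\Sigma$ an alphabet. Then $\mathrm{Rev}(S,\Sigma)$ consists of precisely all finite sums of series from $\mathrm{Rev}_1(S,\Sigma)$; that is, a series $r \in S\langle\langle\Sigma^*\rangle\rangle$ belongs to $\mathrm{Rev}(S,\Sigma)$ if and only if $r = r_1 + \cdots + r_k$ for some $k \in \mathbb{N}$ (the empty sum being the zero series) and some $r_1,\ldots,r_k \in \mathrm{Rev}_1(S,\Sigma)$.
   Context: A semiring $(S,+,\cdot,0,1)$ has $(S,+,0)$ a commutative monoid, $(S,\cdot,1)$ a monoid, $\cdot$ distributing over $+$ on both sides and $0$ absorbing. A formal power series over $S$ and a finite nonempty alphabet $\Sigma$ is a map $r\colon \Sigma^*\to S$, written $(r,w)$ for its value at $w$; the set of these is $S\langle\langle\Sigma^*\rangle\rangle$, with pointwise addition. A weighted automaton over $S$ and $\Sigma$ is $\mathcal{A}=(Q,\sigma,\iota,\tau)$ with $Q$ a finite set, $\sigma\colon Q\times\Sigma\times Q\to S$, and $\iota,\tau\colon Q\to S$ (initial and final weights). A run on $w=a_1\cdots a_t$ is a sequence $q_0a_1q_1\cdots a_tq_t$ with $\sigma(q_{k-1},a_k,q_k)\neq 0$ for all $k$; its weight is $\iota(q_0)\sigma(q_0,a_1,q_1)\cdots\sigma(q_{t-1},a_t,q_t)\tau(q_t)$, and the series $\|\mathcal{A}\|$ realised by $\mathcal{A}$ has $(\|\mathcal{A}\|,w)$ equal to the sum of the weights of all runs on $w$. $\mathcal{A}$ is reversible if for all $p,p',q,q'\in Q$, $a\in\Sigma$: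 (i) if $\sigma(p,a,q)\neq0$ and $\sigma(p,a,q')\neq0$ then $q=q'$; (ii) if $\sigma(p,a,q)\neq0$ and $\sigma(p',a,q)\neq0$ then $p=p'$. $\mathrm{Rev}(S,\Sigma)$ denotes the set of series realised by reversible weighted automata over $S$ and $\Sigma$, and $\mathrm{Rev}_1(S,\Sigma)$ the set of series realised by reversible weighted automata over $S$ and $\Sigma$ having precisely one state $q$ with $\iota(q)\neq 0$. *)

(* Defs.v *)
From mathcomp Require Import all_boot all_algebra.
Set Implicit Arguments. Unset Strict Implicit. Unset Printing Implicit Defensive.
Import GRing.Theory.
Local Open Scope ring_scope.

(* Semiring S : pzSemiRingType (0 = 1 allowed, as in the paper's definition). *)

Definition series (S : pzSemiRingType) (Sigma : finType) := seq Sigma -> S.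

Record wautomaton (S : pzSemiRingType) (Sigma : finType) := WAut {
  wa_Q : finType;
  wa_sigma : wa_Q -> Sigma -> wa_Q -> S;
  wa_iota : wa_Q -> S;
  wa_tau : wa_Q -> S }.
Arguments wa_sigma {S Sigma} w _ _ _.
Arguments wa_iota {S Sigma} w _.
Arguments wa_tau {S Sigma} w _.

(* A run on w = a_1...a_t is given by its state sequence q_0 ... q_t
   (q_0 = head, rest = qs with size qs = size w) with all transitions nonzero. *)
Fixpoint is_run (S : pzSemiRingType) (Sigma : finType) (A : wautomaton S Sigma)
    (q : wa_Q A) (w : seq Sigma) (qs : seq (wa_Q A)) : bool :=
  match w, qs with
  | [::], [::] => true
  | a :: w', q' :: qs' => (wa_sigma A q a q' != 0) && is_run q' w' qs'
  | _, _ => false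
  end.

Fixpoint trans_weight (S : pzSemiRingType) (Sigma : finType) (A : wautomaton S Sigma)
    (q : wa_Q A) (w : seq Sigma) (qs : seq (wa_Q A)) : S :=
  match w, qs with
  | a :: w', q' :: qs' => wa_sigma A q a q' * trans_weight q' w' qs'
  | _, _ => 1
  end.

Definition run_weight (S : pzSemiRingType) (Sigma : finType) (A : wautomaton S Sigma)
    (q0 : wa_Q A) (w : seq Sigma) (qs : (size w).-tuple (wa_Q A)) : S :=
  wa_iota A q0 * trans_weight q0 w qs * wa_tau A (last q0 qs).

Definition behaviour (S : pzSemiRingType) (Sigma : finType) (A : wautomaton S Sigma)
    : series S Sigma := fun w =>
  \sum_(q0 : wa_Q A) \sum_(qs : (size w).-tuple (wa_Q A) | is_run q0 w qs)
     run_weight q0 qs.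

Definition reversible (S : pzSemiRingType) (Sigma : finType) (A : wautomaton S Sigma) :=
  (forall p q q' a, wa_sigma A p a q != 0 -> wa_sigma A p a q' != 0 -> q = q') /\
  (forall p p' q a, wa_sigma A p a q != 0 -> wa_sigma A p' a q != 0 -> p = p').

Definition Rev (S : pzSemiRingType) (Sigma : finType) (r : series S Sigma) : Prop :=
  exists A : wautomaton S Sigma, reversible A /\ behaviour A =1 r.

Definition Rev1 (S : pzSemiRingType) (Sigma : finType) (r : series S Sigma) : Prop :=
  exists A : wautomaton S Sigma, reversible A /\
    (exists q : wa_Q A, wa_iota A q != 0 /\ forall q', wa_iota A q' != 0 -> q' = q) /\
    behaviour A =1 r.

(* Main.v *)
Require Import Defs.
From mathcomp Require Import all_boot all_algebra.
Import GRing.Theory.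
Local Open Scope ring_scope.

Section Aux.
Variables (S : pzSemiRingType) (Sigma : finType).

Fixpoint G (A : wautomaton S Sigma) (q : wa_Q A) (w : seq Sigma) : S :=
  match w with
  | [::] => wa_tau A q
  | a :: w' => \sum_(q' : wa_Q A) wa_sigma A q a q' * G A q' w'
  end.
Arguments G {A} q w.

Lemma runsum (A : wautomaton S Sigma) (w : seq Sigma) (q : wa_Q A) :
  \sum_(qs : (size w).-tuple (wa_Q A) | is_run q w qs)
     (trans_weight q w qs * wa_tau A (last q qs)) = G q w.
Proof.
elim: w q => [|a w IH] q /=.
  rewrite (big_pred1 [tuple]) /=; first by rewrite mul1r.
  by move=> t; rewrite [t]tuple0 /= eqxx.
rewrite big_mkcond /=.
rewrite (reindex (fun p : wa_Q A * (size w).-tuple (wa_Q A) => [tuple of p.1 :: p.2])) /=; last first.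
  exists (fun t : (size w).+1.-tuple (wa_Q A) => (thead t, [tuple of behead t])).
    by move=> [x t] _ /=; rewrite theadE; congr pair; apply: val_inj.
  by move=> t _ /=; rewrite [in RHS](tuple_eta t).
rewrite -(pair_bigA _ (fun x (t : (size w).-tuple (wa_Q A)) => if is_run q (a :: w) [tuple of x :: t] then trans_weight q (a :: w) [tuple of x :: t] * wa_tau A (last q [tuple of x :: t]) else 0)) /=.
apply: eq_bigr => x _.
rewrite -IH big_distrr /= [RHS]big_mkcond /=.
apply: eq_bigr => t _.
by case: eqVneq => [->|_] /=; case: ifP => _; rewrite ?mul0r ?mulrA.
Qed.

Lemma behaviourE (A : wautomaton S Sigma) w :
  behaviour A w = \sum_(q : wa_Q A) wa_iota A q * G q w.
Proof.
apply: eq_bigr => q _; rewrite -runsum big_distrr /=.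
by apply: eq_bigr => t _; rewrite /run_weight mulrA.
Qed.


Definition zeroA : wautomaton S Sigma :=
  @WAut S Sigma void (fun _ _ _ => 0) (fun _ => 0) (fun _ => 0).

Lemma zeroA_rev : reversible zeroA.
Proof. by split => -[]. Qed.

Lemma zeroA_beh w : behaviour zeroA w = 0.
Proof. by rewrite behaviourE big1 // => -[]. Qed.

Definition unionA (A1 A2 : wautomaton S Sigma) : wautomaton S Sigma :=
  @WAut S Sigma (wa_Q A1 + wa_Q A2)%type
    (fun x a y => match x, y with
                  | inl p, inl q => wa_sigma A1 p a q
                  | inr p, inr q => wa_sigma A2 p a q
                  | _, _ => 0 end)
    (fun x => match x with inl p => wa_iota A1 p | inr p => wa_iota A2 p end)
    (fun x => match x with inl p => wa_tau A1 p | inr p => wa_tau A2 p end).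

Lemma unionA_rev A1 A2 : reversible A1 -> reversible A2 -> reversible (unionA A1 A2).
Proof.
move=> [H1 H1'] [H2 H2']; split.
- move=> [p|p] [q|q] [q'|q'] a //=; rewrite ?eqxx //.
  + by move=> h h'; rewrite (H1 _ _ _ _ h h').
  + by move=> h h'; rewrite (H2 _ _ _ _ h h').
- move=> [p|p] [p'|p'] [q|q] a //=; rewrite ?eqxx //.
  + by move=> h h'; rewrite (H1' _ _ _ _ h h').
  + by move=> h h'; rewrite (H2' _ _ _ _ h h').
Qed.

Lemma unionA_G1 A1 A2 q w : G (A:=unionA A1 A2) (inl q) w = G q w.
Proof.
elim: w q => [|a w IH] q //=.
rewrite big_sumType /= [X in _ + X]big1 ?addr0 => [|y _]; last by rewrite mul0r.
by apply: eq_bigr => y _; rewrite IH.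
Qed.

Lemma unionA_G2 A1 A2 q w : G (A:=unionA A1 A2) (inr q) w = G q w.
Proof.
elim: w q => [|a w IH] q //=.
rewrite big_sumType /= [X in X + _]big1 ?add0r => [|y _]; last by rewrite mul0r.
by apply: eq_bigr => y _; rewrite IH.
Qed.

Lemma unionA_beh A1 A2 w :
  behaviour (unionA A1 A2) w = behaviour A1 w + behaviour A2 w.
Proof.
rewrite !behaviourE big_sumType /=.
by congr (_ + _); apply: eq_bigr => q _; rewrite ?unionA_G1 ?unionA_G2.
Qed.

Definition restrA (A : wautomaton S Sigma) (q0 : wa_Q A) : wautomaton S Sigma :=
  @WAut S Sigma (wa_Q A) (wa_sigma A)
    (fun q => if q == q0 then wa_iota A q0 else 0) (wa_tau A).

Lemma restrA_G A q0 (q : wa_Q A) w : G (A:=restrA A q0) q w = G (A:=A) q w.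
Proof.
elim: w q => [|a w IH] q //=.
by apply: eq_bigr => y _; rewrite IH.
Qed.

Lemma restrA_beh A q0 w : behaviour (restrA A q0) w = wa_iota A q0 * G q0 w.
Proof.
rewrite behaviourE (bigD1 q0) //= eqxx big1 ?addr0; first by congr (_ * _); exact: restrA_G.
by move=> q /negPf ->; rewrite mul0r.
Qed.

End Aux.
Arguments G {S Sigma A} q w.
Arguments restrA {S Sigma}.
Arguments unionA {S Sigma}.
Arguments zeroA {S Sigma}.

Theorem proposition1 (S : pzSemiRingType) (Sigma : finType) (HSigma : (0 < #|Sigma|)%N)
    (r : series S Sigma) :
  Rev r <->
  exists (k : nat) (rs : 'I_k -> series S Sigma),
    (forall i, Rev1 (rs i)) /\ (forall w, r w = \sum_(i < k) rs i w).
Proof.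
split.
- case=> A [rev beh].
  pose P := [pred q | wa_iota A q != 0].
  exists #|P|, (fun i : 'I_#|P| => behaviour (restrA A (enum_val i))); split.
  + move=> i; exists (restrA A (enum_val i)); split; first exact: rev.
    split=> //; exists (enum_val i); split.
      by rewrite /= eqxx; have := enum_valP i.
    by move=> q' /=; case: (q' =P enum_val i) => // _; rewrite eqxx.
  + move=> w; rewrite -(beh w) behaviourE (bigID P) /=.
    rewrite [X in _ + X]big1 ?addr0 => [|q /negPn/eqP ->]; last by rewrite mul0r.
    rewrite (big_enum_val (A:=P) (fun q => wa_iota A q * G q w)).
    by apply: eq_bigr => i _; rewrite restrA_beh.
- case=> k [rs [H1 H2]].
  suff [A [revA behA]] : Rev (fun w => \sum_(i < k) rs i w).
    by exists A; split => // w; rewrite behA H2.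
  elim: k rs H1 {H2} => [|k IH] rs H1.
    by exists zeroA; split; [exact: zeroA_rev | move=> w; rewrite zeroA_beh big_ord0].
  have [A [rA bA]] := IH (fun i => rs (widen_ord (leqnSn k) i)) (fun i => H1 _).
  have [B [rB [_ bB]]] := H1 ord_max.
  exists (unionA A B); split; first exact: unionA_rev.
  by move=> w; rewrite unionA_beh bA bB big_ord_recr.
Qed.
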